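(* Let $R$ be an almost Dedekind domain and let $\alpha$ be an ordinal. Then: (a) for every $P\in\mathrm{Max}(R)$, $PT_\alpha\neq T_\alpha$ if and only if $P\in\mathrm{Crit}_\alpha(R)$; (b) $\mathrm{Crit}_\alpha(R)$ is the image of $\mathrm{Max}(T_\alpha)$ under the canonical restriction map $\mathrm{Max}(T_\alpha)\to\mathrm{Max}(R)$, $Q\mapsto Q\cap R$; (c) $\mathrm{Crit}_\alpha(R)$ is closed in $\mathcal{M}$.
   Context: $R$ almost Dedekind: $R_M$ is a DVR for each maximal $M$; $K$ quotient field. $\mathcal{M}$ is $\mathrm{Max}(R)$ with the inverse topology (restriction of the coarsest topology on $\mathrm{Spec}(R)$ in which Zariski-open Zariski-compact sets are closed). A maximal ideal $M$ of an almost Dedekind domain $A$ is critical if every finitely generated ideal $J\subseteq M$ satisfies $J\subseteq N^2$ for some maximal $N$; $\mathrm{Crit}(A)$ is the set of these. Recursively: $\mathrm{Crit}_0(R)=\mathrm{Max}(R)$, $T_0=R$; $\mathrm{Crit}_{\gamma+1}(R)=\{P\in\mathrm{Max}(R)\mid PT_\gamma\in\mathrm{Crit}(T_\gamma)\}$; $\mathrm{Crit}_\lambda(R)=\bigcap_{\gamma<\lambda}\mathrm{Crit}_\gamma(R)$ for limit $\lambda$; $T_\alpha=\bigcap\{R_P\mid P\in\mathrm{Crit}_\alpha(R)\}$ ($=K$ if empty). *)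

(* Defs.v *)
(* Everything lives inside the quotient field K of R:
   rings are subsets (K -> Prop) of K, ideals are subsets of K as well. *)
From HB Require Import structures.
From mathcomp Require Import all_boot all_order all_algebra.
Set Implicit Arguments.
Unset Strict Implicit.
Unset Printing Implicit Defensive.
Import Order.TTheory GRing.Theory Num.Theory.
Local Open Scope ring_scope.

Section Defs.
Variable K : fieldType.

Definition kset := K -> Prop.
Definition subset_of (A B : kset) := forall x, A x -> B x.

Definition subring (A : kset) :=
  [/\ A 0, A 1, (forall x y, A x -> A y -> A (x - y)) &
      (forall x y, A x -> A y -> A (x * y))].

Definition quotient_field (R : kset) :=
  forall x : K, exists a b, [/\ R a, R b, b != 0 & x = a / b].

Definition ideal (A I : kset) :=
  [/\ subset_of I A, I 0, (forall x y, I x -> I y -> I (x + y)) &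
      (forall a x, A a -> I x -> I (a * x))].

Definition max_ideal (A M : kset) :=
  [/\ ideal A M, ~ M 1 &
      forall J, ideal A J -> subset_of M J -> ~ J 1 -> subset_of J M].

Definition prime_ideal (A P : kset) :=
  [/\ ideal A P, ~ P 1 &
      forall x y, A x -> A y -> P (x * y) -> P x \/ P y].

Definition gen_ideal (A S : kset) : kset :=
  fun x => forall J, ideal A J -> subset_of S J -> J x.

Definition ext_ideal (I T : kset) : kset := gen_ideal T I.

Definition sq_ideal (A N : kset) : kset :=
  gen_ideal A (fun x => exists a b, [/\ N a, N b & x = a * b]).

Definition loc (R P : kset) : kset :=
  fun x => exists a b, [/\ R a, R b, ~ P b & x = a / b].

Definition DVR (V : kset) :=
  exists v : K -> int,
  [/\ (forall x y, x != 0 -> y != 0 -> v (x * y) = v x + v y),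
      (forall x y, x != 0 -> y != 0 -> x + y != 0 ->
                   Num.min (v x) (v y) <= v (x + y)),
      (forall n : int, exists x, x != 0 /\ v x = n) &
      (forall x, V x <-> (x = 0 \/ (x != 0 /\ 0 <= v x)))].

Definition almost_dedekind (R : kset) :=
  forall M, max_ideal R M -> DVR (loc R M).

Definition critical (A M : kset) :=
  max_ideal A M /\
  forall s : seq K, (forall x, x \in s -> A x) ->
    subset_of (gen_ideal A (fun x => x \in s)) M ->
    exists N, max_ideal A N /\
      subset_of (gen_ideal A (fun x => x \in s)) (sq_ideal A N).

(* the intersection of the R_P, P in a set C of ideals (= K if C empty) *)
Definition Tof (R : kset) (C : kset -> Prop) : kset :=
  fun x => forall P, C P -> loc R P x.

(* ordinals: elements of an arbitrary well-ordered type (O, lt) *)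
Section Ord.
Variables (O : Type) (lt : O -> O -> Prop) (wf : well_founded lt).

Definition is_succ (g a : O) := lt g a /\ forall b, lt g b -> ~ lt b a.

Definition crit_step (R : kset) (a : O)
  (rec : forall b, lt b a -> kset -> Prop) : kset -> Prop :=
  fun P =>
     ((forall b, ~ lt b a) /\ max_ideal R P)
  \/ (exists g (h : lt g a), [/\ is_succ g a, max_ideal R P &
          critical (Tof R (rec g h)) (ext_ideal P (Tof R (rec g h)))])
  \/ [/\ (exists b, lt b a), (forall g, ~ is_succ g a) &
          forall b (h : lt b a), rec b h P].

Definition Crit (R : kset) : O -> kset -> Prop :=
  Fix wf (fun _ => kset -> Prop) (crit_step R).

Definition Tal (R : kset) (a : O) : kset := Tof R (Crit R a).
End Ord.

Definition zar_open (R : kset) (U : kset -> Prop) :=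
  exists I, ideal R I /\
    forall P, U P <-> (prime_ideal R P /\ ~ subset_of I P).

Definition zar_compact (R : kset) (U : kset -> Prop) :=
  forall (Idx : Type) (F : Idx -> kset -> Prop),
    (forall i, zar_open R (F i)) ->
    (forall P, U P -> exists i, F i P) ->
    exists (n : nat) (f : nat -> Idx),
      forall P, U P -> exists k, (k < n)%N /\ F (f k) P.

(* closed sets of the inverse topology: the smallest family of subsets of
   Spec(R) containing the Zariski-open Zariski-compact sets and closed under
   finite unions and arbitrary intersections *)
Definition inv_closed (R : kset) (X : kset -> Prop) :=
  forall Cl : (kset -> Prop) -> Prop,
    (forall U, zar_open R U -> zar_compact R U -> Cl U) ->
    Cl (fun _ => False) ->
    (forall A B, Cl A -> Cl B -> Cl (fun P => A P \/ B P)) ->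
    (forall (I : Type) (F : I -> kset -> Prop), (forall i, Cl (F i)) ->
        Cl (fun P => prime_ideal R P /\ forall i, F i P)) ->
    Cl X.

Definition closed_in_Max (R : kset) (C : kset -> Prop) :=
  exists X, inv_closed R X /\ forall P, C P <-> (max_ideal R P /\ X P).

End Defs.

(* Main.v *)
Require Import Defs.
From mathcomp Require Import all_boot all_order all_algebra.
From Stdlib Require Import Classical FunctionalExtensionality.
From Stdlib Require List.
From mathcomp Require classical_sets.
From mathcomp Require Import ring zify.
Set Implicit Arguments.
Unset Strict Implicit.
Unset Printing Implicit Defensive.
Import Order.TTheory GRing.Theory Num.Theory.
Local Open Scope ring_scope.

Section Basic.
Variable K : fieldType.
Implicit Types (A I J S : kset K).

Lemma sr0 A : subring A -> A 0. Proof. by case. Qed.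
Lemma sr1 A : subring A -> A 1. Proof. by case. Qed.
Lemma srB A x y : subring A -> A x -> A y -> A (x - y). Proof. by case=> _ _ h _; apply: h. Qed.
Lemma srM A x y : subring A -> A x -> A y -> A (x * y). Proof. by case=> _ _ _ h; apply: h. Qed.
Lemma srN A x : subring A -> A x -> A (- x).
Proof. by move=> h hx; rewrite -sub0r; apply: srB=> //; apply: sr0. Qed.
Lemma srD A x y : subring A -> A x -> A y -> A (x + y).
Proof. by move=> h hx hy; rewrite -[y]opprK; apply: srB => //; apply: srN. Qed.
Lemma srX A x n : subring A -> A x -> A (x ^+ n).
Proof. move=> h hx; elim: n => [|n IH]; first by rewrite expr0; apply: sr1.
by rewrite exprS; apply: srM. Qed.

Lemma id_sub A I x : ideal A I -> I x -> A x. Proof. by case=> h _ _ _; apply: h. Qed.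
Lemma id0 A I : ideal A I -> I 0. Proof. by case. Qed.
Lemma idD A I x y : ideal A I -> I x -> I y -> I (x + y). Proof. by case=> _ _ h _; apply: h. Qed.
Lemma idM A I a x : ideal A I -> A a -> I x -> I (a * x). Proof. by case=> _ _ _ h; apply: h. Qed.
Lemma idMr A I a x : ideal A I -> A a -> I x -> I (x * a).
Proof. by move=> h ha hx; rewrite mulrC; exact: (idM h ha hx). Qed.
Lemma idN A I x : subring A -> ideal A I -> I x -> I (- x).
Proof. move=> hA h hx; rewrite -mulN1r; exact: (idM h (srN hA (sr1 hA)) hx). Qed.
Lemma idB A I x y : subring A -> ideal A I -> I x -> I y -> I (x - y).
Proof. by move=> hA h hx hy; apply: (idD h hx); exact: (idN hA h hy). Qed.

Lemma ideal_self A : subring A -> ideal A A.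
Proof. move=> h; split => //; [exact: sr0|move=> *; exact: srD|move=> *; exact: srM]. Qed.

Lemma ideal_ext A I I' : (forall z, I z <-> I' z) -> ideal A I -> ideal A I'.
Proof.
move=> e [h1 h2 h3 h4]; split.
- by move=> x /e /h1.
- by apply/e.
- by move=> x y /e hx /e hy; apply/e; apply: h3.
- by move=> a x ha /e hx; apply/e; apply: h4.
Qed.

Lemma id_sum A I (T : Type) (l : seq T) (f : T -> K) :
  ideal A I -> (forall p, List.In p l -> I (f p)) -> I (\sum_(p <- l) f p).
Proof.
move=> hI; elim: l => [|p l IH] H; first by rewrite big_nil; apply: id0 hI.
rewrite big_cons; apply: (idD hI); first exact: (H p (or_introl erefl)).
by apply: IH => q hq; apply: H; right.
Qed.

Lemma sr_sum A (T : Type) (l : seq T) (f : T -> K) :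
  subring A -> (forall p, List.In p l -> A (f p)) -> A (\sum_(p <- l) f p).
Proof. by move=> h; apply: id_sum; apply: ideal_self. Qed.

Lemma gen_sub A S : subset_of S (gen_ideal A S).
Proof. by move=> x hx J _ hJ; apply: hJ. Qed.

Lemma gen_min A S J : ideal A J -> subset_of S J -> subset_of (gen_ideal A S) J.
Proof. by move=> hJ hS x hx; apply: hx. Qed.

Lemma gen_ideal_ideal A S : subring A -> subset_of S A -> ideal A (gen_ideal A S).
Proof.
move=> hA hS; split.
- by move=> x hx; apply: hx => //; apply: ideal_self.
- by move=> J hJ _; apply: id0 hJ.
- by move=> x y hx hy J hJ hSJ; apply: idD hJ (hx J hJ hSJ) (hy J hJ hSJ).
- by move=> a x ha hx J hJ hSJ; apply: idM hJ ha (hx J hJ hSJ).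
Qed.

Definition comb A S : kset K := fun z => exists l : seq (K * K),
  (forall p, List.In p l -> A p.1 /\ S p.2) /\ z = \sum_(p <- l) p.1 * p.2.

Lemma comb_ideal A S : subring A -> subset_of S A -> ideal A (comb A S).
Proof.
move=> hA hS; split.
- move=> x [l [hl ->]]; apply: sr_sum => // p /hl [h1 h2]; apply: srM => //; exact: hS.
- by exists [::]; rewrite big_nil.
- move=> x y [l1 [h1 ->]] [l2 [h2 ->]]; exists (l1 ++ l2); rewrite big_cat; split => //.
  by move=> p hp; case: (List.in_app_or _ _ _ hp) => [/h1|/h2].
- move=> a x ha [l [hl ->]]; exists [seq (a * p.1, p.2) | p <- l]; split.
    move=> p hp; case: (proj1 (List.in_map_iff _ _ _) hp) => q [<- /hl [hq1 hq2]].
    split => //=; exact: srM.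
  by rewrite big_map big_distrr /=; apply: eq_bigr => p _; rewrite mulrA.
Qed.

Lemma gen_comb A S : subring A -> subset_of S A -> subset_of (gen_ideal A S) (comb A S).
Proof.
move=> hA hS z hz; refine (gen_min (comb_ideal hA hS) _ hz).
move=> x hx; exists [:: (1, x)]; rewrite big_cons big_nil /= mul1r addr0; split => //.
by move=> p [<-|[]]; split => //; apply: sr1.
Qed.

Lemma comb_in A S J : ideal A J -> subset_of S J -> subset_of (comb A S) J.
Proof.
move=> hJ hS x [l [hl ->]]; refine (id_sum hJ _) => p /hl [h1 h2].
exact: (idM hJ h1 (hS _ h2)).
Qed.

End Basic.


Section Ring.
Variables (K : fieldType) (R : kset K) (hR : subring R).
Implicit Types (A I J S M : kset K).

Definition addgen M a : kset K := fun z => exists m r, [/\ M m, R r & z = m + r * a].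

Lemma addgen_ideal M a : ideal R M -> R a -> ideal R (addgen M a).
Proof.
move=> hM ha; split.
- move=> z [m [r [hm hr ->]]]; apply: srD => //; [exact: (id_sub hM hm)|exact: srM].
- by exists 0, 0; split; [exact: id0 hM|exact: sr0|rewrite mul0r addr0].
- move=> z1 z2 [m1 [r1 [h1 hr1 ->]]] [m2 [r2 [h2 hr2 ->]]].
  exists (m1 + m2), (r1 + r2); split; [exact: (idD hM h1 h2)|exact: srD|].
  by ring.
- move=> b z hb [m [r [hm hr ->]]]; exists (b * m), (b * r); split.
  + exact: (idM hM hb hm).
  + exact: srM.
  + by rewrite mulrDr mulrA.
Qed.

Lemma addgen_sub M a : ideal R M -> subset_of M (addgen M a).
Proof. by move=> hM m hm; exists m, 0; split => //; [exact: sr0|rewrite mul0r addr0]. Qed.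

Lemma addgen_a M a : ideal R M -> addgen M a a.
Proof. by move=> hM; exists 0, 1; split; [exact: id0 hM|exact: sr1|rewrite mul1r add0r]. Qed.

Lemma zorn_ideal J x : ideal R J -> R x -> (forall n, ~ J (x ^+ n)) ->
  exists M, [/\ ideal R M, subset_of J M, (forall n, ~ M (x ^+ n)) &
    forall B, ideal R B -> subset_of M B -> (forall n, ~ B (x ^+ n)) -> subset_of B M].
Proof.
move=> hJ hx hJx.
pose Pf := fun A : classical_sets.set K =>
  ideal R (fun z => A z \/ J z) /\ forall n, ~ (A (x ^+ n) \/ J (x ^+ n)).
have [A [[hA hAx] hmax]] : exists A, Pf A /\ (forall B, classical_sets.proper A B -> ~ Pf B).
  apply: classical_sets.Zorn_bigcup => F hF htot.
  pose U := classical_sets.bigcup F id.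
  have Ue : forall z, U z <-> exists2 X, F X & X z by [].
  have up : forall X0 z, F X0 -> (U z \/ J z) ->
      exists X, [/\ F X, (forall t, X0 t -> X t) & (X z \/ J z)].
    move=> X0 z hX0 [/Ue [Y hY hYz]|hz]; last by exists X0; split => //; right.
    case: (htot X0 Y hX0 hY) => hs.
      by exists Y; split => //; left.
    by exists X0; split => //; left; apply: hs.
  have upI : forall X, F X -> ideal R (fun z => X z \/ J z) by move=> X /hF [].
  have toU : forall X z, F X -> X z \/ J z -> U z \/ J z.
    by move=> X z hX [h|h]; [left; apply/Ue; exists X|right].
  split; last first.
    by move=> n [/Ue [X /hF [_ hX] hXz]|hn]; [apply: (hX n); left|exact: (hJx n)].
  split.
  - move=> z [/Ue [X hX hXz]|hz]; first exact: (id_sub (upI X hX) (or_introl hXz)).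
    exact: (id_sub hJ hz).
  - by right; exact: id0 hJ.
  - move=> z1 z2 h1 h2.
    case: h1 => [h1|h1].
      case/Ue: (h1) => X0 hX0 hz1.
      have [X [hX hsub hz2]] := up X0 z2 hX0 h2.
      apply: (toU X _ hX); apply: (idD (upI X hX)) => //; left; exact: hsub.
    case: h2 => [h2|h2]; last by right; exact: (idD hJ h1 h2).
    case/Ue: (h2) => X0 hX0 hz2.
    have [X [hX hsub hz1]] := up X0 z1 hX0 (or_intror h1).
    apply: (toU X _ hX); apply: (idD (upI X hX)) => //; left; exact: hsub.
  - move=> a z ha [hz|hz]; last by right; exact: (idM hJ ha hz).
    case/Ue: (hz) => X hX hXz.
    apply: (toU X _ hX); exact: (idM (upI X hX) ha (or_introl hXz)).
exists (fun z => A z \/ J z); split => //.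
- by move=> z hz; right.
- move=> B hB hMB hBx z hz; apply: NNPP => hnz.
  apply: (hmax B).
    split; first by move=> t ht; apply: hMB; left.
    by move=> hBA; apply: hnz; left; apply: hBA.
  split.
    apply: (ideal_ext _ hB) => t; split; first by left.
    by case=> // ht; apply: hMB; right.
  by move=> n [h|h]; [exact: (hBx n)|apply: (hBx n); apply: hMB; right].
Qed.

Lemma zorn_prime J x : ideal R J -> R x -> (forall n, ~ J (x ^+ n)) ->
  exists P, [/\ prime_ideal R P, subset_of J P & ~ P x].
Proof.
move=> hJ hx hJx; have [M [hM hJM hMx hmax]] := zorn_ideal hJ hx hJx.
exists M; split => //; last by move=> h; apply: (hMx 1%N); rewrite expr1.
split => //; first by move=> h; apply: (hMx 0%N); rewrite expr0.
move=> a b ha hb hab; apply: NNPP => /not_or_and [na nb].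
have ex : forall c, R c -> ~ M c -> exists n m r, [/\ M m, R r & x ^+ n = m + r * c].
  move=> c hc nc; apply: NNPP => hne; apply: nc.
  apply: (hmax _ (addgen_ideal hM hc) (addgen_sub c hM)); last exact: addgen_a.
  move=> n [m [r [hm hr he]]]; apply: hne; by exists n, m, r.
have [n [m1 [r1 [h1 hr1 e1]]]] := ex a ha na.
have [k [m2 [r2 [h2 hr2 e2]]]] := ex b hb nb.
apply: (hMx (n + k)%N); rewrite exprD e1 e2.
have -> : (m1 + r1 * a) * (m2 + r2 * b) = m1 * (m2 + r2 * b) + (r1 * a) * m2 + (r1 * r2) * (a * b).
  by ring.
have hm2b : R (m2 + r2 * b) by apply: srD => //; [exact: (id_sub hM h2)|exact: srM].
apply: (idD hM); first apply: (idD hM).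
- rewrite mulrC; exact: (idM hM hm2b h1).
- exact: (idM hM (srM hR hr1 ha) h2).
- exact: (idM hM (srM hR hr1 hr2) hab).
Qed.

Lemma zorn_max J : ideal R J -> ~ J 1 -> exists M, max_ideal R M /\ subset_of J M.
Proof.
move=> hJ hJ1.
have [|M [hM hJM hMx hmax]] := zorn_ideal hJ (sr1 hR) (x := 1).
  by move=> n; rewrite expr1n.
exists M; split => //; split => //; first by have := hMx 0%N; rewrite expr0.
move=> B hB hMB hB1; apply: hmax => // n; rewrite expr1n; exact: hB1.
Qed.

Lemma max_comax M a : max_ideal R M -> R a -> ~ M a ->
  exists m r, [/\ M m, R r & m + r * a = 1].
Proof.
move=> [hM hM1 hmax] ha na; apply: NNPP => hne.
have h1 : ~ addgen M a 1 by move=> [m [r [hm hr he]]]; apply: hne; exists m, r; split.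
by apply: na; apply: (hmax _ (addgen_ideal hM ha) (addgen_sub a hM) h1); exact: addgen_a.
Qed.

Lemma max_prime M : max_ideal R M -> prime_ideal R M.
Proof.
move=> hMM; have [hM hM1 _] := hMM; split => // a b ha hb hab.
case: (classic (M a)) => [|na]; [by left|right].
have [m [r [hm hr he]]] := max_comax hMM ha na.
have -> : b = b * m + r * (a * b) by rewrite -[LHS]mulr1 -he; ring.
apply: (idD hM); [exact: (idM hM hb hm)|exact: (idM hM hr hab)].
Qed.

Lemma primeX Q x n : prime_ideal R Q -> R x -> ~ Q x -> ~ Q (x ^+ n).
Proof.
move=> [hQ hQ1 hp] hx nx; elim: n => [|n IH]; first by rewrite expr0.
rewrite exprS => /(hp _ _ hx (srX n hR hx)) [] //.
Qed.

End Ring.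


Section Loc.
Variables (K : fieldType) (R : kset K) (hR : subring R).
Implicit Types (A I J S M P Q : kset K).

Lemma prime0 Q : prime_ideal R Q -> Q 0. Proof. by case=> h _ _; exact: id0 h. Qed.

Lemma locR Q x : prime_ideal R Q -> R x -> loc R Q x.
Proof. move=> [_ h1 _] hx; exists x, 1; split => //; [exact: sr1|by rewrite divr1]. Qed.

Lemma loc_subring Q : prime_ideal R Q -> subring (loc R Q).
Proof.
move=> hQ; have Q0 := prime0 hQ; have [hQi hQ1 hp] := hQ; split.
- exact: locR (sr0 hR).
- exact: locR (sr1 hR).
- move=> x y [a [b [ha hb nb ->]]] [c [d [hc hd nd ->]]].
  have b0 : b != 0 by apply/eqP => e; apply: nb; rewrite e.
  have d0 : d != 0 by apply/eqP => e; apply: nd; rewrite e.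
  exists (a * d - c * b), (b * d); split.
  + by apply: srB => //; apply: srM.
  + exact: srM.
  + by case/(hp _ _ hb hd).
  + by field; apply/andP.
- move=> x y [a [b [ha hb nb ->]]] [c [d [hc hd nd ->]]].
  have b0 : b != 0 by apply/eqP => e; apply: nb; rewrite e.
  have d0 : d != 0 by apply/eqP => e; apply: nd; rewrite e.
  exists (a * c), (b * d); split.
  + exact: srM.
  + exact: srM.
  + by case/(hp _ _ hb hd).
  + by field; apply/andP.
Qed.

Lemma Tof_subring C : (forall Q, C Q -> prime_ideal R Q) -> subring (Tof R C).
Proof.
move=> hC; split.
- by move=> Q /hC hQ; exact: (sr0 (loc_subring hQ)).
- by move=> Q /hC hQ; exact: (sr1 (loc_subring hQ)).
- by move=> x y hx hy Q hQ; exact: (srB (loc_subring (hC Q hQ)) (hx Q hQ) (hy Q hQ)).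
- by move=> x y hx hy Q hQ; exact: (srM (loc_subring (hC Q hQ)) (hx Q hQ) (hy Q hQ)).
Qed.

Lemma R_Tof C x : (forall Q, C Q -> prime_ideal R Q) -> R x -> Tof R C x.
Proof. by move=> hC hx Q /hC hQ; exact: locR. Qed.

Definition isv (V : kset K) (v : K -> int) :=
  [/\ (forall x y, x != 0 -> y != 0 -> v (x * y) = v x + v y),
      (forall x y, x != 0 -> y != 0 -> x + y != 0 ->
                   Num.min (v x) (v y) <= v (x + y)),
      (forall n : int, exists x, x != 0 /\ v x = n) &
      (forall x, V x <-> (x = 0 \/ (x != 0 /\ 0 <= v x)))].

Section Val.
Variables (P : kset K) (v : K -> int) (hP : max_ideal R P) (hv : isv (loc R P) v).

Let hPp : prime_ideal R P. Proof. exact: max_prime. Qed.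
Let hPi : ideal R P. Proof. by case: hP. Qed.

Lemma vM x y : x != 0 -> y != 0 -> v (x * y) = v x + v y. Proof. by case: hv => h _ _ _; apply: h. Qed.
Lemma v1 : v 1 = 0.
Proof. have := vM (oner_neq0 K) (oner_neq0 K); rewrite mulr1 => h.
by apply: (addrI (v 1)); rewrite addr0 -h. Qed.
Lemma vV x : x != 0 -> v x^-1 = - v x.
Proof. move=> x0; have := vM x0 (invr_neq0 x0); rewrite mulfV // v1 => h.
by apply/eqP; rewrite -addr_eq0 addrC -h. Qed.
Lemma vdiv x y : x != 0 -> y != 0 -> v (x / y) = v x - v y.
Proof. by move=> x0 y0; rewrite vM ?invr_neq0 // vV. Qed.
Lemma vloc x : loc R P x <-> (x = 0 \/ (x != 0 /\ 0 <= v x)). Proof. by case: hv. Qed.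
Lemma loc_v x : x != 0 -> loc R P x -> 0 <= v x.
Proof. move=> x0 /vloc [e|[]//]; by rewrite e eqxx in x0. Qed.
Lemma v_loc x : 0 <= v x -> loc R P x.
Proof. move=> h; apply/vloc; case: (eqVneq x 0) => [->|x0]; [by left|by right]. Qed.
Lemma vR x : R x -> x != 0 -> 0 <= v x.
Proof. by move=> hx x0; apply: loc_v => //; exact: locR. Qed.
Lemma vunit b : R b -> ~ P b -> v b = 0.
Proof.
move=> hb nb; have b0 : b != 0 by apply/eqP => e; apply: nb; rewrite e; exact: prime0.
have h1 := vR hb b0.
have : loc R P b^-1 by exists 1, b; split => //; [exact: sr1|rewrite div1r].
move/(loc_v (invr_neq0 b0)); rewrite vV // oppr_ge0 => h2.
by apply/eqP; rewrite eq_le h1 h2.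
Qed.
Lemma vP a : R a -> a != 0 -> (P a <-> 0 < v a).
Proof.
move=> ha a0; split; last first.
  by move=> h; apply: NNPP => na; move: h; rewrite vunit.
move=> hPa; rewrite lt_def; apply/andP; split; last exact: vR.
apply/negP => /eqP va.
have : loc R P a^-1 by apply: v_loc; rewrite vV // va.
move=> [c [d [hc hd nd e]]].
have d0 : d != 0 by apply/eqP => e'; apply: nd; rewrite e'; exact: prime0.
apply: nd.
have -> : d = c * a.
  have : a^-1 * a = c / d * a by rewrite e.
  rewrite mulVf // => e2; apply: (mulIf (invr_neq0 d0)); rewrite mulfV //.
  by rewrite e2; ring.
exact: (idM hPi hc hPa).
Qed.
Lemma P_nz : exists p, P p /\ p != 0.
Proof.
case: hv => _ _ hs _; have [y [y0 vy]] := hs 1.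
have : loc R P y by apply: v_loc; rewrite vy.
move=> [a [b [ha hb nb e]]].
have b0 : b != 0 by apply/eqP => e'; apply: nb; rewrite e'; exact: prime0.
have ea : a = y * b by rewrite e mulfVK.
have a0 : a != 0 by rewrite ea mulf_neq0.
exists a; split => //; apply/(vP ha a0); rewrite ea vM // vy vunit //.
Qed.

End Val.
End Loc.


Lemma min_elt (K : fieldType) (v : K -> int) (s : seq K) :
  (exists x, x \in s /\ x != 0) ->
  exists xj, [/\ xj \in s, xj != 0 & forall x, x \in s -> x != 0 -> v xj <= v x].
Proof.
elim: s => [|y s IH]; first by case=> x [].
move=> hex; case: (classic (exists x, x \in s /\ x != 0)) => [/IH [xj [hxj xj0 hmin]]|hn].
  case: (boolP ((y != 0) && (v y < v xj))) => [/andP [y0 hlt]|hno].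
    exists y; split => //; first by rewrite inE eqxx.
    move=> x; rewrite inE => /orP [/eqP ->|hx] x0 //.
    by apply: ltW; apply: (lt_le_trans hlt); apply: hmin.
  exists xj; split => //; first by rewrite inE hxj orbT.
  move=> x; rewrite inE => /orP [/eqP ->|hx] x0; last exact: hmin.
  by move: hno; rewrite x0 /= -leNgt.
have y0 : y != 0.
  case: hex => x [hx x0]; move: hx; rewrite inE => /orP [/eqP <-|hx] //.
  by case: hn; exists x.
exists y; split => //; first by rewrite inE eqxx.
move=> x; rewrite inE => /orP [/eqP ->|hx] x0 //.
by case: hn; exists x.
Qed.

Section AD.
Variables (K : fieldType) (R : kset K) (hR : subring R) (hqf : quotient_field R)
  (had : almost_dedekind R).
Implicit Types (A I J S M P Q : kset K).

Lemma getv M : max_ideal R M -> exists v, isv (loc R M) v.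
Proof. exact: had. Qed.

Lemma common_den M (s : seq K) : prime_ideal R M -> (forall x, x \in s -> loc R M x) ->
  exists d, [/\ R d, ~ M d & forall x, x \in s -> R (d * x)].
Proof.
move=> hM; have [hMi hM1 hp] := hM; elim: s => [|y s IH] hs.
  by exists 1; split => //; exact: sr1.
have [d [hd nd hds]] : exists d, [/\ R d, ~ M d & forall x, x \in s -> R (d * x)].
  by apply: IH => x hx; apply: hs; rewrite inE hx orbT.
have [a [b [ha hb nb e]]] : loc R M y by apply: hs; rewrite inE eqxx.
have b0 : b != 0 by apply/eqP => e'; apply: nb; rewrite e'; exact: (prime0 hM).
exists (d * b); split; first exact: (srM hR hd hb).
  by case/(hp _ _ hd hb).
move=> x; rewrite inE => /orP [/eqP ->|hx].
  have -> : d * b * y = d * a by rewrite e; field.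
  exact: (srM hR hd ha).
by rewrite mulrAC; apply: srM => //; apply: hds.
Qed.

Definition invs (s : seq K) (h : K) := forall y, y \in s -> R (h * y).

Lemma inv_lemma (s : seq K) : (forall x, x \in s -> R x) ->
  (exists x, x \in s /\ x != 0) ->
  exists l : seq (K * K), (forall p, List.In p l -> p.1 \in s /\ invs s p.2) /\
     1 = \sum_(p <- l) p.1 * p.2.
Proof.
move=> hsR hnz.
pose J : kset K := fun z => exists l : seq (K * K),
  (forall p, List.In p l -> p.1 \in s /\ invs s p.2) /\ z = \sum_(p <- l) p.1 * p.2.
apply: NNPP => hn.
have hJ : ideal R J.
  split.
  - move=> x [l [hl ->]]; apply: sr_sum => // p /hl [h1 h2].
    by rewrite mulrC; apply: h2.
  - by exists [::]; rewrite big_nil.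
  - move=> x y [l1 [h1 ->]] [l2 [h2 ->]]; exists (l1 ++ l2); rewrite big_cat; split => //.
    by move=> p hp; case: (List.in_app_or _ _ _ hp) => [/h1|/h2].
  - move=> a x ha [l [hl ->]]; exists [seq (p.1, a * p.2) | p <- l]; split.
      move=> p hp; case: (proj1 (List.in_map_iff _ _ _) hp) => q [<- /hl [hq1 hq2]].
      split => //= y hy; rewrite -mulrA; apply: srM => //; exact: hq2.
    by rewrite big_map big_distrr /=; apply: eq_bigr => p _; ring.
have [M [hM hJM]] : exists M, max_ideal R M /\ subset_of J M.
  by apply: (zorn_max hR hJ) => h1; apply: hn; exact: h1.
have hMp := max_prime hR hM.
have [v hv] := getv hM.
have [xj [hxj xj0 hmin]] := min_elt v hnz.
have hden : forall z, z \in [seq x / xj | x <- s] -> loc R M z.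
  move=> z /mapP [x hx ->]; case: (eqVneq x 0) => [->|x0].
    by rewrite mul0r; apply: (locR hR hMp); exact: sr0.
  apply: (v_loc hv); rewrite (vdiv hv) // subr_ge0; exact: hmin.
have [d [hd nd hds]] := common_den hMp hden.
apply: nd; apply: hJM; exists [:: (xj, d / xj)]; split.
  move=> p [<-|[]]; split => //= y hy.
  by rewrite -mulrA [_^-1 * _]mulrC; apply: hds; apply/mapP; exists y.
by rewrite big_cons big_nil /= addr0 mulrC mulfVK.
Qed.

Lemma key_lemma (C : kset K -> Prop) (s : seq K) :
  (forall Q, C Q -> max_ideal R Q) ->
  (forall x, x \in s -> R x) -> (exists x, x \in s /\ x != 0) ->
  (forall Q, C Q -> exists x, x \in s /\ ~ Q x) ->
  gen_ideal (Tof R C) (fun x => x \in s) 1.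
Proof.
move=> hC hsR hnz hsep.
have hCp : forall Q, C Q -> prime_ideal R Q by move=> Q /hC; exact: max_prime.
have hT := Tof_subring hR hCp.
have hsT : subset_of (fun x => x \in s) (Tof R C) by move=> x hx; apply: (R_Tof hR hCp); exact: hsR.
have hG := gen_ideal_ideal hT hsT.
have [l [hl ->]] := inv_lemma hsR hnz.
refine (id_sum hG _) => p /hl [h1 h2].
refine (idMr hG _ (gen_sub (A:=Tof R C) (S:=fun x => x \in s) h1)).
move=> Q hQ; have [x [hx nx]] := hsep Q hQ.
have hM := hC Q hQ; have [v hv] := getv hM.
have x0 : x != 0 by apply/eqP => e; apply: nx; rewrite e; exact: (prime0 (max_prime hR hM)).
have vx := vunit hR hM hv (hsR x hx) nx.
case: (eqVneq p.2 0) => [->|p0]; first by apply: (locR hR (max_prime hR hM)); exact: sr0.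
apply: (v_loc hv); have := vR hR hM hv (h2 x hx) (mulf_neq0 p0 x0).
by rewrite (vM hv) // vx addr0.
Qed.

Section PT.
Variables (P T : kset K) (hP : max_ideal R P) (hT : subring T)
  (hRT : forall x, R x -> T x) (hTP : forall x, T x -> loc R P x).

Let hPi : ideal R P. Proof. by case: hP. Qed.
Let hPT_sub : subset_of P T. Proof. by move=> x hx; apply: hRT; exact: (id_sub hPi hx). Qed.
Lemma PT_ideal : ideal T (gen_ideal T P). Proof. exact: gen_ideal_ideal. Qed.

Lemma PT_v v : isv (loc R P) v -> forall z, gen_ideal T P z -> z = 0 \/ (z != 0 /\ 0 < v z).
Proof.
move=> hv.
pose I : kset K := fun z => T z /\ (z = 0 \/ (z != 0 /\ 0 < v z)).
have hI : ideal T I.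
  split.
  - by move=> x [].
  - by split; [exact: sr0|left].
  - move=> x y [hx ex] [hy ey]; split; first exact: srD.
    case: ex => [->|[x0 vx]]; first by rewrite add0r.
    case: ey => [->|[y0 vy]]; first by rewrite addr0; right.
    case: (eqVneq (x + y) 0) => [->|s0]; first by left.
    right; split => //; case: hv => _ hmin _ _.
    by apply: (lt_le_trans _ (hmin _ _ x0 y0 s0)); rewrite lt_min vx vy.
  - move=> a x ha [hx ex]; split; first exact: srM.
    case: ex => [->|[x0 vx]]; first by rewrite mulr0; left.
    case: (eqVneq a 0) => [->|a0]; first by rewrite mul0r; left.
    right; split; first exact: mulf_neq0.
    rewrite (vM hv) //; apply: ltr_wpDl => //; exact: (loc_v hv a0 (hTP ha)).
move=> z hz; have [] := gen_min hI _ hz => //.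
move=> p hp; split; first exact: hPT_sub.
case: (eqVneq p 0) => [->|p0]; first by left.
by right; split => //; apply/(vP hR hP hv (id_sub hPi hp) p0).
Qed.

Lemma PT_not1 : ~ gen_ideal T P 1.
Proof.
have [v hv] := getv hP.
move/(PT_v hv) => [/eqP|[_]]; first by rewrite oner_eq0.
by rewrite (v1 hv) ltxx.
Qed.

Lemma PT_R z : gen_ideal T P z -> R z -> P z.
Proof.
have [v hv] := getv hP.
move=> hz hRz; case: (PT_v hv hz) => [->|[z0 vz]]; first exact: id0 hPi.
by apply/(vP hR hP hv hRz z0).
Qed.

Lemma PT_full v : isv (loc R P) v -> forall y, T y -> y != 0 -> 0 < v y -> gen_ideal T P y.
Proof.
move=> hv y hy y0 vy.
have hPT := PT_ideal.
have [a [b [ha hb b0 e]]] := hqf y.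
have hsR : forall x, x \in [:: a; b] -> R x by move=> x; rewrite !inE => /orP [/eqP ->|/eqP ->].
have hnz : exists x, x \in [:: a; b] /\ x != 0 by exists b; rewrite !inE eqxx orbT.
have [l [hl e1]] := inv_lemma hsR hnz.
rewrite -[y]mulr1 e1 big_distrr /=.
refine (id_sum hPT _) => p /hl [h1 h2].
have hg : R (p.2 * a) by apply: h2; rewrite inE eqxx.
have hgb : R (p.2 * b) by apply: h2; rewrite !inE eqxx orbT.
have hPg : P (p.2 * a).
  case: (eqVneq (p.2 * a) 0) => [->|g0]; first exact: id0 hPi.
  apply/(vP hR hP hv hg g0).
  have p0 : p.2 != 0 by apply: contraNneq g0 => ->; rewrite mul0r.
  have -> : p.2 * a = y * (p.2 * b) by rewrite e; field.
  rewrite (vM hv) ?mulf_neq0 //; apply: ltr_pwDl => //.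
  exact: (vR hR hP hv hgb (mulf_neq0 p0 b0)).
move: h1; rewrite !inE => /orP [/eqP ->|/eqP ->].
  have -> : y * (a * p.2) = (p.2 * a) * y by ring.
  exact: (idMr hPT hy (gen_sub hPg)).
have -> : y * (b * p.2) = (p.2 * a) * 1 by rewrite e; field.
exact: (idMr hPT (sr1 hT) (gen_sub hPg)).
Qed.

Lemma PT_max : max_ideal T (gen_ideal T P).
Proof.
have hPT := PT_ideal.
have [v hv] := getv hP.
split => //; first exact: PT_not1.
move=> J hJ hsub nJ y hy.
have hTy := id_sub hJ hy.
case: (eqVneq y 0) => [->|y0]; first exact: id0 hPT.
have vy0 := loc_v hv y0 (hTP hTy).
case: (boolP (0 < v y)) => [vy|]; first exact: (PT_full hv hTy y0 vy).
rewrite lt_def vy0 andbT negbK => /eqP vy.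
have [a [b [ha hb nb e]]] := hTP hTy.
have b0 : b != 0 by apply/eqP => e'; apply: nb; rewrite e'; exact: id0 hPi.
have ea : a = y * b by rewrite e mulfVK.
have a0 : a != 0 by rewrite ea mulf_neq0.
have na : ~ P a.
  move/(vP hR hP hv ha a0); rewrite ea (vM hv) // vy (vunit hR hP hv hb nb) addr0.
  by rewrite ltxx.
have [m [r [hm hr e1]]] := max_comax hR hP ha na.
case: nJ; rewrite -e1; apply: (idD hJ).
  by apply: hsub; exact: gen_sub.
have -> : r * a = (r * b) * y by rewrite ea; ring.
exact: (idM hJ (hRT (srM hR hr hb)) hy).
Qed.

End PT.
End AD.


Lemma gather (K : fieldType) (A : Type) (good : A -> Prop) (Rel : K -> seq A -> Prop) (s : seq K) :
  (forall x, x \in s -> exists l, (forall p, List.In p l -> good p) /\ Rel x l) ->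
  exists L, (forall p, List.In p L -> good p) /\
    forall x, x \in s -> exists l, (forall p, List.In p l -> List.In p L) /\ Rel x l.
Proof.
elim: s => [|y s IH] h; first by exists [::]; split => // x.
have [L [hL hLs]] : exists L, (forall p, List.In p L -> good p) /\
    forall x, x \in s -> exists l, (forall p, List.In p l -> List.In p L) /\ Rel x l.
  by apply: IH => x hx; apply: h; rewrite inE hx orbT.
have [l0 [hl0 hr0]] := h y (mem_head _ _).
exists (l0 ++ L); split.
  by move=> p hp; case: (List.in_app_or _ _ _ hp) => [/hl0|/hL].
move=> x; rewrite inE => /orP [/eqP ->|hx].
  by exists l0; split => // p hp; apply: List.in_or_app; left.
have [l [hl hr]] := hLs x hx; exists l; split => // p hp; apply: List.in_or_app; right; exact: hl.
Qed.

Lemma In_mem (T : eqType) (x : T) (l : seq T) : List.In x l -> x \in l.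
Proof. elim: l => [|y l IH] //= [->|h]; rewrite inE ?eqxx //; by rewrite IH ?orbT. Qed.

Section Comp.
Variables (K : fieldType) (R : kset K) (hR : subring R).

Lemma Ds_compact (s : seq K) (P0 : kset K) : (forall x, x \in s -> R x) ->
  prime_ideal R P0 -> ~ subset_of (gen_ideal R (fun x => x \in s)) P0 ->
  zar_compact R (fun Q => prime_ideal R Q /\ ~ subset_of (gen_ideal R (fun x => x \in s)) Q).
Proof.
move=> hsR hP0 nP0 Idx F hF hcov.
have [i0 _] := hcov P0 (conj hP0 nP0).
pose good (p : Idx * K) := R p.2 /\ forall Q, prime_ideal R Q -> ~ Q p.2 -> F p.1 Q.
pose G : kset K := fun z => exists l : seq (Idx * K),
   (forall p, List.In p l -> good p) /\ z = \sum_(p <- l) p.2.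
have hG : ideal R G.
  split.
  - by move=> x [l [hl ->]]; apply: sr_sum => // p /hl [].
  - by exists [::]; rewrite big_nil.
  - move=> x y [l1 [h1 ->]] [l2 [h2 ->]]; exists (l1 ++ l2); rewrite big_cat; split => //.
    by move=> p hp; case: (List.in_app_or _ _ _ hp) => [/h1|/h2].
  - move=> a x ha [l [hl ->]]; exists [seq (p.1, a * p.2) | p <- l]; split.
      move=> p hp; case: (proj1 (List.in_map_iff _ _ _) hp) => q [<- /hl [hq1 hq2]].
      split => /=; first exact: srM.
      move=> Q hQ nQ; apply: hq2 => // hq; apply: nQ.
      by case: hQ => hQi _ _; exact: (idM hQi ha hq).
    by rewrite big_map big_distrr.
have hgen : forall Q, ideal R Q -> ~ subset_of (gen_ideal R (fun x => x \in s)) Q ->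
    exists x, x \in s /\ ~ Q x.
  move=> Q hQ nQ; apply: NNPP => hne; apply: nQ; apply: (gen_min hQ) => x hx.
  by apply: NNPP => nx; apply: hne; exists x.
have hpow : forall x, x \in s -> exists l, (forall p, List.In p l -> good p) /\
     exists n, x ^+ n = \sum_(p <- l) p.2.
  move=> x hx; apply: NNPP => hne.
  have hn : forall n, ~ G (x ^+ n).
    by move=> n [l [hl e]]; apply: hne; exists l; split => //; exists n.
  have [P [hP hGP nPx]] := zorn_prime hR hG (hsR x hx) hn.
  have [i hi] : exists i, F i P.
    apply: hcov; split => // hsub; apply: nPx; apply: hsub; exact: gen_sub.
  have [I [hI hIe]] := hF i.
  have [_ nIP] := proj1 (hIe P) hi.
  have [y [hy ny]] : exists y, I y /\ ~ P y.
    by apply: NNPP => hne2; apply: nIP => y hy; apply: NNPP => ny; apply: hne2; exists y.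
  apply: ny; apply: hGP; exists [:: (i, y)]; split; last by rewrite big_cons big_nil addr0.
  move=> p [<-|[]]; split; first exact: (id_sub hI hy).
  move=> Q hQ nQ; apply/(hIe Q); split => // hsub; apply: nQ; exact: hsub.
have [L [hL hLs]] := gather hpow.
exists (List.length L), (fun k => (List.nth k L (i0, 0)).1).
move=> Q [hQ nQ].
have [hQi _ _] := hQ.
have [x [hx nx]] := hgen Q hQi nQ.
have [l [hl [n e]]] := hLs x hx.
have nxn := primeX hR hQ (hsR x hx) nx (n := n).
have [p [hpl np]] : exists p, List.In p l /\ ~ Q p.2.
  apply: NNPP => hne; apply: nxn; rewrite e; refine (id_sum hQi _) => p hp.
  by apply: NNPP => np; apply: hne; exists p.
have [k [hk ek]] := List.In_nth L p (i0, 0) (hl p hpl).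
exists k; split; first by apply/ssrnat.ltP.
rewrite ek; have [_ hg] := hL p (hl p hpl); exact: hg.
Qed.

Definition SepP (C : kset K -> Prop) := forall P, max_ideal R P -> ~ C P ->
  exists s : seq K, [/\ (forall x, x \in s -> P x), (exists x, x \in s /\ x != 0) &
     forall Q, C Q -> exists x, x \in s /\ ~ Q x].
Definition MaxP (C : kset K -> Prop) := forall P, C P -> max_ideal R P.

Lemma closed_lemma C : MaxP C -> SepP C -> closed_in_Max R C.
Proof.
move=> hM hS.
case: (classic (exists Q0, C Q0)) => [[Q0 hQ0]|hno]; last first.
  exists (fun _ => False); split; first by move=> Cl _ h0 _ _.
  by move=> P; split => [hP|[]//]; case: hno; exists P.
pose Idx := {s : seq K | (forall x, x \in s -> R x) /\ forall Q, C Q -> exists x, x \in s /\ ~ Q x}.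
pose F := fun (i : Idx) (Q : kset K) =>
  prime_ideal R Q /\ ~ subset_of (gen_ideal R (fun x => x \in sval i)) Q.
exists (fun P => prime_ideal R P /\ forall i, F i P); split.
  move=> Cl hU h0 hUn hI; apply: (hI Idx F) => i; apply: hU.
    exists (gen_ideal R (fun x => x \in sval i)); split => //.
    apply: gen_ideal_ideal => // x; exact: (proj1 (svalP i)).
  apply: (Ds_compact (P0 := Q0)); first exact: (proj1 (svalP i)).
    exact: (max_prime hR (hM _ hQ0)).
  have [x [hx nx]] := proj2 (svalP i) Q0 hQ0.
  by move=> hsub; apply: nx; apply: hsub; exact: gen_sub.
move=> P; split.
  move=> hP; have hPm := hM P hP; split => //; split; first exact: max_prime.
  move=> i; split; first exact: max_prime.
  have [x [hx nx]] := proj2 (svalP i) P hP.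
  by move=> hsub; apply: nx; apply: hsub; exact: gen_sub.
move=> [hPm [_ hall]]; apply: NNPP => nC.
have [s [hsP hnz hsep]] := hS P hPm nC.
have [hPi _ _] := hPm.
have hsR : forall x, x \in s -> R x by move=> x /hsP; exact: (id_sub hPi).
have [_ nsub] := hall (exist _ s (conj hsR hsep)).
apply: nsub; apply: (gen_min hPi) => x; exact: hsP.
Qed.

End Comp.


Lemma mem_In (T : eqType) (x : T) (l : seq T) : x \in l -> List.In x l.
Proof. elim: l => [|y l IH] //=; rewrite inE => /orP [/eqP ->|/IH]; by [left|right]. Qed.

Section Ord.
Variables (K : fieldType) (R : kset K) (hR : subring R) (hqf : quotient_field R)
  (had : almost_dedekind R).
Variables (O : Type) (lt : O -> O -> Prop) (wf : well_founded lt)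
  (lt_trans : forall a b c, lt a b -> lt b c -> lt a c)
  (lt_total : forall a b, lt a b \/ a = b \/ lt b a).

Lemma CritE a P : Crit wf R a P <-> @crit_step K O lt R a (fun b _ => Crit wf R b) P.
Proof.
rewrite /Crit Fix_eq //.
move=> x f g hfg.
have -> : f = g by apply: functional_extensionality_dep => y;
  apply: functional_extensionality_dep => p; apply: hfg.
by [].
Qed.

Lemma succ_uniq g g' a : is_succ lt g a -> is_succ lt g' a -> g = g'.
Proof.
move=> [h1 h2] [h1' h2']; case: (lt_total g g') => [h|[//|h]].
  by case: (h2 g' h).
by case: (h2' g h).
Qed.

Lemma a_dir C : MaxP R C -> SepP R C -> forall P, max_ideal R P -> ~ C P ->
  gen_ideal (Tof R C) P 1.
Proof.
move=> hM hS P hP nC.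
have [s [hsP hnz hsep]] := hS P hP nC.
have hCp : forall Q, C Q -> prime_ideal R Q by move=> Q /hM; exact: max_prime.
have hT := Tof_subring hR hCp.
have [hPi _ _] := hP.
have hPT : subset_of P (Tof R C) by move=> x hx; apply: (R_Tof hR hCp); exact: (id_sub hPi hx).
have hsR : forall x, x \in s -> R x by move=> x /hsP; exact: (id_sub hPi).
apply: (key_lemma hR had hM hsR hnz hsep (gen_ideal_ideal hT hPT)).
by move=> x /hsP; exact: gen_sub.
Qed.

Lemma main_ind a : MaxP R (Crit wf R a) /\ SepP R (Crit wf R a).
Proof.
elim/(well_founded_induction wf): a => a IH.
have hMa : MaxP R (Crit wf R a).
  move=> P /CritE [[_ hm]|[[g [h [_ hm _]]]|[[b hb] _ hall]]] //.
  exact: (proj1 (IH b hb) P (hall b hb)).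
split => // P hP nC.
case: (classic (exists b, lt b a)) => [hex|hno]; last first.
  by exfalso; apply: nC; apply/CritE; rewrite /crit_step; left; split => // b hb; apply: hno; exists b.
case: (classic (exists g, is_succ lt g a)) => [[g hg]|hns]; last first.
  have [b [hb nb]] : exists b, lt b a /\ ~ Crit wf R b P.
    apply: NNPP => hne; apply: nC; apply/CritE; rewrite /crit_step; right; right; split => //.
      by move=> g hg; apply: hns; exists g.
    move=> b hb /=; apply: NNPP => nb; apply: hne; by exists b.
  have [s [hsP hnz hsep]] := proj2 (IH b hb) P hP nb.
  exists s; split => // Q /CritE [[hno _]|[[g' [h' [hs' _ _]]]|[_ _ hall]]].
  - by case: (hno b hb).
  - by case: hns; exists g'.
  - exact: (hsep Q (hall b hb)).
have hga := proj1 hg.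
have [Mg Sg] := IH g hga.
set T := Tof R (Crit wf R g).
have hCp : forall Q, Crit wf R g Q -> prime_ideal R Q by move=> Q /Mg; exact: max_prime.
have hT : subring T := Tof_subring hR hCp.
have hRT : forall x, R x -> T x by move=> x hx; exact: (R_Tof hR hCp).
have incl : forall Q, Crit wf R a Q -> Crit wf R g Q /\ critical T (ext_ideal Q T).
  move=> Q /CritE [[hno _]|[[g' [h' [hs' hm hc]]]|[_ hns _]]].
  - by case: (hno g hga).
  - have eg := succ_uniq hs' hg; subst g'.
    split => //; apply: NNPP => nQ.
    have h1 := a_dir Mg Sg hm nQ.
    by case: hc => [[_ hn1 _] _]; apply: hn1.
  - by case: (hns g).
case: (classic (Crit wf R g P)) => [hgP|ngP]; last first.
  have [s [hsP hnz hsep]] := Sg P hP ngP.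
  by exists s; split => // Q /incl [hQ _]; exact: hsep.
have hTP : forall x, T x -> loc R P x by move=> x hx; exact: hx.
have hPmax := PT_max hR hqf had hP hT hRT hTP.
have [hPi _ _] := hP.
have hPT : subset_of P T by move=> x hx; apply: hRT; exact: (id_sub hPi hx).
have [s' [hs'T hs'sub hs'N]] : exists s' : seq K,
    [/\ (forall x, x \in s' -> T x),
        subset_of (gen_ideal T (fun x => x \in s')) (gen_ideal T P) &
        forall N, max_ideal T N ->
          ~ subset_of (gen_ideal T (fun x => x \in s')) (sq_ideal T N)].
  apply: NNPP => hne; apply: nC; apply/CritE; rewrite /crit_step; right; left.
  exists g, hga; split => //; split => // s' hs' hsub.
  apply: NNPP => hnN; apply: hne; exists s'; split => // N hN hsq.
  by apply: hnN; exists N.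
have hcomb : forall x, x \in s' -> exists l : seq (K * K),
    (forall p, List.In p l -> T p.1 /\ P p.2) /\ x = \sum_(p <- l) p.1 * p.2.
  move=> x hx; apply: (gen_comb hT hPT); apply: hs'sub; exact: gen_sub.
have [L [hL hLs]] := gather hcomb.
have [v hv] := getv had hP.
have [p0 [hp0 p00]] := P_nz hR hP hv.
exists (p0 :: [seq p.2 | p <- L]); split.
- move=> x; rewrite inE => /orP [/eqP ->//|/mapP [p hp ->]].
  exact: (proj2 (hL p (mem_In hp))).
- by exists p0; rewrite inE eqxx.
move=> Q hQa; apply: NNPP => hne.
have hsQ : forall x, x \in p0 :: [seq p.2 | p <- L] -> Q x.
  by move=> x hx; apply: NNPP => nx; apply: hne; exists x.
have [_ [_ hcQ]] := incl Q hQa.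
have [hQi _ _] := hMa Q hQa.
have hQT : subset_of Q T by move=> x hx; apply: hRT; exact: (id_sub hQi hx).
have hQTi : ideal T (gen_ideal T Q) := gen_ideal_ideal hT hQT.
have hsub : subset_of (gen_ideal T (fun x => x \in s')) (ext_ideal Q T).
  apply: (gen_min hQTi) => x hx; have [l [hl e]] := hLs x hx.
  apply: (comb_in hQTi (gen_sub (A:=T) (S:=Q))); exists l; split => // p hp.
  split; first exact: (proj1 (hL p (hl p hp))).
  apply: hsQ; rewrite inE; apply/orP; right; apply/mapP; exists p => //.
  exact: In_mem (hl p hp).
have [N [hN hNsq]] := hcQ s' hs'T hsub.
exact: (hs'N N hN hNsq).
Qed.

End Ord.

Close Scope ring_scope.

Theorem lemma5p3 (K : fieldType) (R : K -> Prop)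
  (O : Type) (lt : O -> O -> Prop) (wf : well_founded lt)
  (lt_trans : forall a b c, lt a b -> lt b c -> lt a c)
  (lt_total : forall a b, lt a b \/ a = b \/ lt b a)
  (alpha : O) :
  subring R -> quotient_field R -> almost_dedekind R ->
  (* (a) *)
  (forall P, max_ideal R P ->
     (~ (forall x, ext_ideal P (Tal wf R alpha) x <-> Tal wf R alpha x)
      <-> Crit wf R alpha P)) /\
  (* (b) *)
  (forall P, Crit wf R alpha P -> max_ideal R P) /\
  (forall P, max_ideal R P ->
     (Crit wf R alpha P <->
      exists Q, max_ideal (Tal wf R alpha) Q /\
                (forall x, P x <-> (Q x /\ R x)))) /\
  (* (c) *)
  closed_in_Max R (Crit wf R alpha).
Proof.
move=> hR hqf had.
have [hMax hSep] := main_ind hR hqf had wf lt_total alpha.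
have hCp : forall Q, Crit wf R alpha Q -> prime_ideal R Q by move=> Q /hMax; exact: max_prime.
have hT : subring (Tal wf R alpha) := Tof_subring hR hCp.
have hRT : forall x, R x -> Tal wf R alpha x by move=> x hx; exact: (R_Tof hR hCp).
have hPT : forall P, max_ideal R P -> subset_of P (Tal wf R alpha).
  by move=> P [hPi _ _] x hx; apply: hRT; exact: (id_sub hPi hx).
split.
  move=> P hP; split.
    move=> hne; apply: NNPP => nC; apply: hne => x.
    have h1 := a_dir hR had (hMax) (hSep) hP nC.
    have hI := gen_ideal_ideal hT (hPT P hP).
    split; first exact: (gen_min (ideal_self hT) (hPT P hP)).
    by move=> hx; rewrite -[x]mulr1; exact: (idM hI hx h1).
  move=> hC he.
  have hTP : forall x, Tal wf R alpha x -> loc R P x by move=> x hx; exact: hx.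
  apply: (PT_not1 hR had hP hT hRT hTP); apply/he; exact: (sr1 hT).
split; first exact: hMax.
split; last exact: (closed_lemma hR hMax hSep).
move=> P hP; split.
  move=> hC.
  have hTP : forall x, Tal wf R alpha x -> loc R P x by move=> x hx; exact: hx.
  exists (gen_ideal (Tal wf R alpha) P); split; first exact: (PT_max hR hqf had hP hT hRT hTP).
  have [hPi _ _] := hP.
  move=> x; split.
    by move=> hx; split; [exact: gen_sub|exact: (id_sub hPi hx)].
  by move=> [hx hxR]; exact: (PT_R hR had hP hT hRT hTP hx hxR).
move=> [Q [[hQi hQ1 _] hQe]]; apply: NNPP => nC.
have h1 := a_dir hR had hMax hSep hP nC.
apply: hQ1; apply: (gen_min hQi _ h1) => x hx; exact: (proj1 (proj1 (hQe x) hx)).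
Qed.
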